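(* Let $0<\lambda<1$ and let $A \subseteq \mathbb{N}$. Suppose there exists a sequence $(c_n)_{n \in \mathbb{N}}$ of positive real numbers with $\lim_{n\to\infty} c_n = 0$ such that for every $n \in \mathbb{N}$, $$\sum_{a \in A[x]} \frac{c_n(1-\lambda)\log(a)\exp(c_n a^{1-\lambda})}{a^\lambda} \sim \exp(c_n x^{1-\lambda}) \qquad (x\to\infty).$$ Then $$\pi_A(x + x^\lambda) - \pi_A(x) \sim \frac{x^\lambda}{\log(x)}.$$
   Context: Here $\mathbb{N} = \{1,2,3,\dots\}$. For $A \subseteq \mathbb{N}$ and $x\in\mathbb{R}$, write $A[x] = \{a \in A : a \le x\}$ and $\pi_A(x) = \# A[x]$. $f\sim g$ means $f(x)/g(x)\to 1$ as $x\to\infty$. *)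

(* Defs.v *)
From Stdlib Require Import Reals List ZArith.
From Coquelicot Require Import Coquelicot.
Import ListNotations.
Open Scope R_scope.

(* Subsets A of N = {1,2,...} are given by boolean predicates on nat;
   only values at a >= 1 matter. *)

(* floor of a real as a natural number (0 for negative x) *)
Definition nat_floor (x : R) : nat := Z.to_nat (Int_part x).

(* A[x] = { a in A : 1 <= a <= x }, as a list *)
Definition A_upto (A : nat -> bool) (x : R) : list nat :=
  filter A (seq 1 (nat_floor x)).

Definition pi_A (A : nat -> bool) (x : R) : R := INR (length (A_upto A x)).

Definition sum_A (A : nat -> bool) (x : R) (F : nat -> R) : R :=
  fold_right Rplus 0 (map F (A_upto A x)).

Definition asymp (f g : R -> R) : Prop :=
  is_lim (fun x => f x / g x) p_infty 1.

(* Main.v *)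
Require Import Defs.
From Stdlib Require Import Reals List ZArith Lra Lia Psatz.
From Coquelicot Require Import Coquelicot.
Open Scope R_scope.

Lemma exp_le' x y : x <= y -> exp x <= exp y.
Proof. intros [H|H]; [left; apply exp_increasing; auto| subst; lra]. Qed.

Lemma nat_floor_spec x : 0 <= x -> INR (nat_floor x) <= x < INR (nat_floor x) + 1.
Proof.
intros Hx. unfold nat_floor. destruct (base_Int_part x) as [H1 H2].
assert (Hz: (0 <= Int_part x)%Z).
{ apply le_IZR. destruct (Rle_lt_dec 0 (IZR (Int_part x))) as [h|h]; [lra|].
  exfalso. assert (IZR (Int_part x) <= -1).
  { assert (Int_part x < 0)%Z by (apply lt_IZR; lra).
    apply IZR_le. lia. }
  lra. }
rewrite INR_IZR_INZ, Z2Nat.id by exact Hz. lra.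
Qed.

Definition sumR (l : list R) := fold_right Rplus 0 l.

Lemma sumR_app l1 l2 : sumR (l1 ++ l2) = sumR l1 + sumR l2.
Proof. induction l1; simpl; [lra|]. unfold sumR in *; simpl; rewrite IHl1; lra. Qed.

Lemma sum_bound (l : list nat) (F : nat -> R) lo hi :
  (forall a, In a l -> lo <= F a <= hi) ->
  INR (length l) * lo <= sumR (map F l) <= INR (length l) * hi.
Proof.
induction l as [|b l IH]; intros H; [simpl; lra|].
change (INR (S (length l)) * lo <= F b + sumR (map F l) <= INR (S (length l)) * hi).
rewrite S_INR. destruct (H b (or_introl eq_refl)).
destruct IH as [I1 I2]; [intros; apply H; right; auto|].
lra.
Qed.

Lemma decomp (A : nat -> bool) x y : 0 <= x <= y ->
  exists l, A_upto A y = A_upto A x ++ l /\ (forall a, In a l -> x < INR a <= y).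
Proof.
intros Hxy.
destruct (nat_floor_spec x) as [Hx1 Hx2]; [lra|].
destruct (nat_floor_spec y) as [Hy1 Hy2]; [lra|].
set (m := nat_floor x) in *. set (m' := nat_floor y) in *.
assert (Hm: (m <= m')%nat).
{ assert (INR m < INR (S m')) by (rewrite S_INR; lra). apply INR_lt in H. lia. }
exists (filter A (seq (1 + m) (m' - m))). split.
- unfold A_upto. fold m m'. replace m' with (m + (m' - m))%nat at 1 by lia.
  rewrite seq_app, filter_app. reflexivity.
- intros a Ha. apply filter_In in Ha. destruct Ha as [Ha _].
  apply in_seq in Ha.
  assert (INR (S m) <= INR a) by (apply le_INR; lia).
  assert (INR a <= INR m') by (apply le_INR; lia).
  rewrite S_INR in *. lra.
Qed.
Lemma frac_mono p1 p2 q1 q2 d1 d2 : 0 < p1 <= p2 -> 0 < q1 <= q2 -> 0 < d2 <= d1 ->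
  p1*q1/d1 <= p2*q2/d2.
Proof.
intros. unfold Rdiv. apply Rmult_le_compat.
- apply Rmult_le_pos; lra.
- left; apply Rinv_0_lt_compat; lra.
- apply Rmult_le_compat; lra.
- apply Rinv_le_contravar; lra.
Qed.

Lemma Rpower_mono_base a b m : 0 < a <= b -> 0 <= m -> Rpower a m <= Rpower b m.
Proof.
intros. unfold Rpower. apply exp_le'. apply Rmult_le_compat_l; [lra|]. apply ln_le; lra.
Qed.

Lemma term_bounds c lam x y a : 0 < c -> 0 < lam < 1 -> 1 < x -> x < a <= y ->
  c*(1-lam)*ln x*exp(c*Rpower x (1-lam)) / Rpower y lam
  <= c*(1-lam)*ln a*exp(c*Rpower a (1-lam)) / Rpower a lam
  <= c*(1-lam)*ln y*exp(c*Rpower y (1-lam)) / Rpower x lam.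
Proof.
intros Hc Hl Hx Ha.
assert (Hlx: 0 < ln x) by (rewrite <- ln_1; apply ln_increasing; lra).
assert (ln x <= ln a) by (apply ln_le; lra).
assert (ln a <= ln y) by (apply ln_le; lra).
assert (0 < c*(1-lam)) by (apply Rmult_lt_0_compat; lra).
split; apply frac_mono.
- split; [apply Rmult_lt_0_compat; lra| apply Rmult_le_compat_l; lra].
- split; [apply exp_pos|]. apply exp_le'. apply Rmult_le_compat_l; [lra|].
  apply Rpower_mono_base; lra.
- split; [apply exp_pos|]. apply Rpower_mono_base; lra.
- split; [apply Rmult_lt_0_compat; lra| apply Rmult_le_compat_l; lra].
- split; [apply exp_pos|]. apply exp_le'. apply Rmult_le_compat_l; [lra|].
  apply Rpower_mono_base; lra.
- split; [apply exp_pos|]. apply Rpower_mono_base; lra.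
Qed.

Lemma mvt_bounds m x h : 0 < m < 1 -> 0 < x -> 0 < h ->
  m * exp ((m-1) * ln (x+h)) * h <= Rpower (x+h) m - Rpower x m <= m * exp ((m-1) * ln x) * h.
Proof.
intros Hm Hx Hh.
destruct (MVT_cor2 (fun t => Rpower t m) (fun t => m * Rpower t (m-1)) x (x+h)) as [c0 [Heq Hc]].
- lra.
- intros c0 Hc0. apply derivable_pt_lim_power. lra.
rewrite Heq. replace (x + h - x) with h by ring. unfold Rpower.
assert (ln x <= ln c0) by (apply ln_le; lra).
assert (ln c0 <= ln (x+h)) by (apply ln_le; lra).
split; apply Rmult_le_compat_r; try lra; apply Rmult_le_compat_l; try lra; apply exp_le'; nra.
Qed.

Lemma ln_1p t : 0 <= t -> ln (1 + t) <= t.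
Proof.
intros. rewrite <- (ln_exp t) at 2. apply ln_le; [lra|]. apply exp_ineq1_le.
Qed.

Lemma eventual lam eta : 0 < lam < 1 -> 0 < eta < 1 -> exists M, forall x, M < x ->
  1 < x /\ 1 - eta <= ln x / ln (x + Rpower x lam) <= 1 /\
  1 - eta <= exp (lam * (ln x - ln (x + Rpower x lam))) <= 1.
Proof.
intros Hl He.
set (K := Rmax 1 (Rmax (1/eta) (- ln eta / (1-lam)))).
exists (exp K). intros x Hx.
assert (HK1: 1 <= K) by apply Rmax_l.
assert (HK2: 1/eta <= K) by (eapply Rle_trans; [apply Rmax_l|apply Rmax_r]).
assert (HK3: - ln eta / (1-lam) <= K) by (eapply Rle_trans; [apply Rmax_r|apply Rmax_r]).
assert (Hx1: 1 < x) by (assert (exp 0 < exp K) by (apply exp_increasing; lra); rewrite exp_0 in *; lra).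
assert (HlxK: K < ln x) by (rewrite <- (ln_exp K); apply ln_increasing; [apply exp_pos|lra]).
set (lx := ln x) in *.
assert (Hxe: x = exp lx) by (unfold lx; rewrite exp_ln; lra).
set (h := Rpower x lam).
assert (Hh0: 0 < h) by apply exp_pos.
assert (Hhx: h <= x) by (unfold h, Rpower; fold lx; apply Rle_trans with (exp lx); [apply exp_le'; nra|lra]).
set (ly := ln (x + h)).
assert (Hly: lx < ly) by (apply ln_increasing; lra).
assert (Hly2: ly < 1 + lx).
{ assert (ly <= ln (2 * x)) by (apply ln_le; lra).
  rewrite ln_mult in H by lra.
  assert (ln 2 < 1).
  { assert (ln 2 < ln (exp 1)); [|rewrite ln_exp in *; lra]. apply ln_increasing; [lra|].
    assert (1 + 1 < exp 1) by (apply exp_ineq1; lra). lra. }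
  fold lx in H. lra. }
assert (Hhx2: h / x <= eta).
{ unfold h, Rpower. fold lx. rewrite Hxe.
  unfold Rdiv. rewrite <- exp_Ropp, <- exp_plus.
  rewrite <- (exp_ln eta) by lra. apply exp_le'.
  assert (- ln eta <= (1-lam) * lx).
  { assert (- ln eta / (1-lam) * (1-lam) = - ln eta) by (field; lra).
    assert (- ln eta / (1-lam) * (1-lam) <= lx * (1-lam)) by (apply Rmult_le_compat_r; lra).
    lra. }
  lra. }
assert (Hdiff: ly - lx <= h / x).
{ unfold ly. replace (x + h) with (x * (1 + h/x)) by (field; lra).
  rewrite ln_mult; [|lra|]. 
  - fold lx. assert (ln (1 + h/x) <= h/x) by (apply ln_1p; unfold Rdiv; apply Rmult_le_pos; [lra|left; apply Rinv_0_lt_compat; lra]). lra.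
  - assert (0 <= h/x) by (unfold Rdiv; apply Rmult_le_pos; [lra|left; apply Rinv_0_lt_compat; lra]). lra. }
split; [lra|]. split.
- assert (Hlx0: 0 < lx) by lra.
  assert (lx / ly * ly = lx) by (field; lra).
  split.
  + assert (1 <= eta * lx).
    { assert (1/eta * eta = 1) by (field; lra).
      assert (1/eta * eta <= lx * eta) by (apply Rmult_le_compat_r; lra). lra. }
    apply (Rmult_le_reg_r ly); [lra|]. nra.
  + apply (Rmult_le_reg_r ly); [lra|]. nra.
- split.
  + eapply Rle_trans; [|apply exp_ineq1_le]. nra.
  + rewrite <- exp_0. apply exp_le'. nra.
Qed.
Lemma final (e u d eta q a1 a2 r s X Y: R):
 0<e<=1 -> 0<u -> u <= e/10 -> d = u*e/10 -> eta = e/10 ->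
 1-eta <= a1 <= 1 -> 1-eta <= a2 <= 1 ->
 r <= X -> X*(1-u) <= 1 ->
 s <= Y -> Y <= 1 - u*a2 + (u*a2)^2 ->
 q*u*a2 <= (1+d)*r - (1-d) -> ((1-d) - (1+d)*s)*a1 <= q*u ->
 Rabs (q - 1) < e.
Proof.
intros He Hu Hue Hd Heta Ha1 Ha2 HrX HX HsY HY Hup Hlo.
subst d eta.
assert (H0: 0 <= u*e/10) by (apply Rmult_le_pos; [apply Rmult_le_pos|]; lra).
apply Rabs_def1.
-
  assert ((1+u*e/10)*r <= (1+u*e/10)*X) by (apply Rmult_le_compat_l; lra).
  assert (H1: q*u*a2 <= (1+u*e/10)*X - (1-u*e/10)) by lra.
  assert (H2: q*u*a2*(1-u) <= u + 2*(u*e/10)).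
  { assert (0 < 1 - u) by lra.
    assert ((1+u*e/10)*X*(1-u) <= 1+u*e/10) by nra. nra. }
  assert (H3: q*a2*(1-u) <= 1 + e/5).
  { apply (Rmult_le_reg_r u); [lra|]. nra. }
  destruct (Rle_lt_dec q 0); [lra|].
  assert (Hp: (1-e/10)*(1-e/10) <= a2*(1-u)) by (apply Rmult_le_compat; lra).
  assert (q*((1-e/10)*(1-e/10)) <= q*(a2*(1-u))) by (apply Rmult_le_compat_l; lra).
  nra.
- assert (Hv: 0 <= u*a2 <= u) by nra.
  set (v := u*a2) in *.
  assert (H1: ((1-u*e/10) - (1+u*e/10)*(1 - v + v^2))*a1 <= q*u).
  { eapply Rle_trans; [|exact Hlo]. apply Rmult_le_compat_r; [lra|].
    assert ((1+u*e/10)*s <= (1+u*e/10)*(1 - v + v^2)) by (apply Rmult_le_compat_l; lra). lra. }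
  assert (H2: u*(1 - e/10 - u - e/5) <= (1-u*e/10) - (1+u*e/10)*(1 - v + v^2)).
  { assert (v*v <= v*u) by (apply Rmult_le_compat_l; lra).
    assert (u*(1-e/10) <= v) by (unfold v; apply Rmult_le_compat_l; lra).
    assert (v*u <= u*u) by (apply Rmult_le_compat_r; lra).
    assert (v*v <= v) by (assert (v*v <= v*1) by (apply Rmult_le_compat_l; lra); lra).
    assert (0 <= (u*e/10)*(v - v*v)) by (apply Rmult_le_pos; lra).
    assert (u*u <= u*(e/10)) by (apply Rmult_le_compat_l; lra).
    replace (v^2) with (v*v) by ring. nra. }
  assert (H3: u*(1 - e/10 - u - e/5)*(1-e/10) <= q*u).
  { eapply Rle_trans; [|exact H1]. assert (0 <= u*(1 - e/10 - u - e/5)) by nra. nra. }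
  assert ((1 - e/10 - u - e/5)*(1-e/10) <= q).
  { apply (Rmult_le_reg_l u); [lra|]. nra. }
  nra.
Qed.

Lemma ratio_bounds S E d : 0 < E -> Rabs (S / E - 1) < d -> (1-d)*E < S < (1+d)*E.
Proof.
intros HE H. apply Rabs_def2 in H. destruct H as [H1 H2].
assert (S / E * E = S) by (field; lra).
split; nra.
Qed.

Lemma expX u : u * 1 <= u -> exp u * (1 - u) <= 1.
Proof.
intros _. assert (1 - u <= exp (-u)) by (pose proof (exp_ineq1_le (-u)); lra).
assert (exp u * exp (-u) = 1) by (rewrite <- exp_plus; replace (u + -u) with 0 by ring; apply exp_0).
pose proof (exp_pos u). nra.
Qed.

Lemma expY v : 0 <= v -> exp (- v) <= 1 - v + v^2.
Proof.
intros Hv. rewrite exp_Ropp. pose proof (exp_ineq1_le v).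
assert (0 < exp v) by apply exp_pos.
apply (Rmult_le_reg_r (exp v)); [lra|]. rewrite Rinv_l by lra.
assert (1 <= (1 - v + v^2) * (1 + v)) by nra.
assert (0 <= 1 - v + v^2) by nra. nra.
Qed.

Theorem mainTheorem6 (lam : R) (A : nat -> bool) :
  0 < lam < 1 ->
  (exists c : nat -> R,
     (forall n, 0 < c n) /\ is_lim_seq c 0 /\
     (forall n,
        asymp
          (fun x => sum_A A x (fun a =>
             c n * (1 - lam) * ln (INR a) * exp (c n * Rpower (INR a) (1 - lam))
             / Rpower (INR a) lam))
          (fun x => exp (c n * Rpower x (1 - lam))))) ->
  asymp (fun x => pi_A A (x + Rpower x lam) - pi_A A x)
        (fun x => Rpower x lam / ln x).
Proof.
intros Hl [c [Hc [Hcl Has]]].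
unfold asymp. apply is_lim_spec. intros eps. simpl.
set (e := Rmin eps 1).
assert (He: 0 < e <= 1) by (unfold e; split; [apply Rmin_glb_lt; [apply cond_pos|lra]|apply Rmin_r]).
assert (Hee: e <= eps) by apply Rmin_l.
apply is_lim_seq_spec in Hcl.
assert (He10: 0 < e/10) by lra.
destruct (Hcl (mkposreal _ He10)) as [N HN].
specialize (HN N (Nat.le_refl _)). simpl in HN.
set (cn := c N) in *.
assert (Hcn: 0 < cn) by apply Hc.
rewrite Rminus_0_r, Rabs_pos_eq in HN by lra.
set (u := cn * (1 - lam)).
assert (Hu: 0 < u) by (apply Rmult_lt_0_compat; lra).
assert (Hue: u <= e/10) by (unfold u; nra).
set (d := u * e / 10).
assert (Hd: 0 < d) by (unfold d; apply Rmult_lt_0_compat; [apply Rmult_lt_0_compat|]; lra).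
pose proof (Has N) as HasN. apply is_lim_spec in HasN.
destruct (HasN (mkposreal _ Hd)) as [M1 HM1]. simpl in HM1.
destruct (eventual lam (e/10) Hl) as [M2 HM2]; [lra|].
exists (Rmax M1 M2). intros x Hx.
assert (HxM1: M1 < x) by (eapply Rle_lt_trans; [apply Rmax_l|exact Hx]).
assert (HxM2: M2 < x) by (eapply Rle_lt_trans; [apply Rmax_r|exact Hx]).
destruct (HM2 x HxM2) as [Hx1 [Ha1 Ha2]].
set (h := Rpower x lam) in *.
assert (Hh: 0 < h) by apply exp_pos.
set (y := x + h) in *.
assert (HyM1: M1 < y) by (unfold y; lra).
set (F := fun a : nat => cn * (1 - lam) * ln (INR a) * exp (cn * Rpower (INR a) (1 - lam)) / Rpower (INR a) lam).
set (Ex := exp (cn * Rpower x (1 - lam))).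
set (Ey := exp (cn * Rpower y (1 - lam))).
assert (HEx: 0 < Ex) by apply exp_pos.
assert (HEy: 0 < Ey) by apply exp_pos.
pose proof (ratio_bounds _ _ _ HEx (HM1 x HxM1)) as HSx.
pose proof (ratio_bounds _ _ _ HEy (HM1 y HyM1)) as HSy.
assert (HSx' : (1-d)*Ex < sum_A A x F < (1+d)*Ex) by exact HSx.
assert (HSy' : (1-d)*Ey < sum_A A y F < (1+d)*Ey) by exact HSy.
clear HSx HSy.
destruct (decomp A x y) as [l [Hleq Hlin]]; [unfold y; lra|].
assert (Hpi: pi_A A y - pi_A A x = INR (length l)).
{ unfold pi_A. rewrite Hleq, length_app, plus_INR. ring. }
assert (HS: sum_A A y F - sum_A A x F = sumR (map F l)).
{ unfold sum_A. rewrite Hleq, map_app. fold (sumR (map F (A_upto A x) ++ map F l)).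
  rewrite sumR_app. unfold sumR. ring. }
set (lx := ln x). set (ly := ln y).
set (Py := Rpower y lam).
assert (HPy: 0 < Py) by apply exp_pos.
set (L := cn*(1-lam)*lx*Ex / Py).
set (U := cn*(1-lam)*ly*Ey / h).
assert (HLU: INR (length l) * L <= sumR (map F l) <= INR (length l) * U).
{ apply sum_bound. intros a Ha. apply term_bounds; auto. }
set (Nn := INR (length l)) in *.
destruct (mvt_bounds (1-lam) x h) as [Hm1 Hm2]; [lra|lra|lra|].
fold y in Hm1, Hm2.
set (a2 := h / Py).
assert (Ha2e: exp (lam * (ln x - ln (x + Rpower x lam))) = a2).
{ fold h y lx ly. unfold a2, h, Py, Rpower. fold lx ly. unfold Rdiv. rewrite <- exp_Ropp, <- exp_plus. f_equal. ring. }
assert (Ha2' : 1 - e/10 <= a2 <= 1) by (rewrite <- Ha2e; exact Ha2). clear Ha2 Ha2e. rename Ha2' into Ha2.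
assert (Hm1': (1-lam) * a2 <= Rpower y (1-lam) - Rpower x (1-lam)).
{ replace ((1-lam)*a2) with ((1 - lam) * exp ((1 - lam - 1) * ln y) * h); [exact Hm1|].
  unfold a2, h, Py, Rpower. rewrite Rmult_assoc. f_equal. unfold Rdiv. rewrite <- exp_Ropp, <- exp_plus, <- exp_plus. f_equal. ring. }
assert (Hm2': Rpower y (1-lam) - Rpower x (1-lam) <= 1 - lam).
{ eapply Rle_trans; [exact Hm2|]. right.
  unfold h, Rpower. rewrite Rmult_assoc, <- exp_plus. replace ((1 - lam - 1) * ln x + lam * ln x) with 0 by ring. rewrite exp_0. ring. }
set (r := Ey / Ex). set (s := Ex / Ey).
assert (Hr: r = exp (cn * (Rpower y (1-lam) - Rpower x (1-lam)))).
{ unfold r, Ey, Ex. unfold Rdiv. rewrite <- exp_Ropp, <- exp_plus. f_equal. ring. }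
assert (Hs: s = exp (- (cn * (Rpower y (1-lam) - Rpower x (1-lam))))).
{ unfold s, Ey, Ex. unfold Rdiv. rewrite <- exp_Ropp, <- exp_plus. f_equal. ring. }
assert (HrX: r <= exp u).
{ rewrite Hr. apply exp_le'. unfold u. apply Rmult_le_compat_l; lra. }
assert (HsY: s <= exp (- (u * a2))).
{ rewrite Hs. apply exp_le'. apply Ropp_le_contravar. unfold u. rewrite Rmult_assoc. apply Rmult_le_compat_l; lra. }
assert (Hlx: 0 < lx) by (unfold lx; rewrite <- ln_1; apply ln_increasing; lra).
assert (Hly: 0 < ly) by (unfold ly; rewrite <- ln_1; apply ln_increasing; unfold y; lra).
set (q := Nn * lx / h).
assert (Hgoal: Rabs (q - 1) < e).
{ apply (final e u d (e/10) q (lx/ly) a2 r s (exp u) (exp (- (u*a2)))); auto; try lra.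
  - apply expX. lra.
  - apply expY. assert (0 <= a2) by lra. apply Rmult_le_pos; lra.
  -
    apply (Rmult_le_reg_r Ex); [lra|].
    replace (q*u*a2*Ex) with (Nn*L) by (unfold q, u, a2, L; field; lra).
    replace (((1+d)*r - (1-d))*Ex) with ((1+d)*Ey - (1-d)*Ex) by (unfold r; field; lra).
    lra.
  - apply (Rmult_le_reg_r (Ey*ly/lx)).
    { apply Rmult_lt_0_compat; [apply Rmult_lt_0_compat; lra|apply Rinv_0_lt_compat; lra]. }
    replace (q*u*(Ey*ly/lx)) with (Nn*U) by (unfold q, u, U; field; lra).
    replace (((1-d) - (1+d)*s) * (lx/ly) * (Ey*ly/lx)) with ((1-d)*Ey - (1+d)*Ex) by (unfold s; field; lra).
    lra. }
replace ((pi_A A y - pi_A A x) / (h / lx)) with q.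
- lra.
- rewrite Hpi. unfold q. field. lra.
Qed.
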